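(* Let $W_1,\dots,W_n$ be proper subspaces of $\mathbb R^d$ with orthogonal projections $P_1,\dots,P_n$, and suppose there exist scalars $a_1,\dots,a_n\in\mathbb R$ and $A>0$ such that $\sum_{i=1}^n a_i^2P_i=A\cdot I$. Then both $\{W_i\}_{i=1}^n$ and $\{W_i^\perp\}_{i=1}^n$ do norm retrieval on $\mathbb R^d$.
   Context: A family of subspaces $\{V_i\}_{i=1}^n$ of $\mathbb R^d$ with orthogonal projections $\{Q_i\}$ does norm retrieval if whenever $x,y\in\mathbb R^d$ satisfy $\|Q_ix\|=\|Q_iy\|$ for all $i$, then $\|x\|=\|y\|$. *)

(* Defs.v *)
(* Vectors of R^d are row vectors 'rV[R]_d; a subspace of R^d
   is represented by a matrix 'M[R]_d whose row space (mxalgebra) is the subspace. *)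
From HB Require Import structures.
From mathcomp Require Import all_boot all_order all_algebra.
Set Implicit Arguments. Unset Strict Implicit. Unset Printing Implicit Defensive.
Import Order.TTheory GRing.Theory Num.Theory.
Local Open Scope ring_scope.

Definition vnorm (R : rcfType) (d : nat) (x : 'rV[R]_d) : R :=
  Num.sqrt (\sum_(j < d) x 0 j ^+ 2).

Definition is_orth_proj (R : rcfType) (d : nat) (W P : 'M[R]_d) : Prop :=
  P *m P = P /\ P^T = P /\ (P == W)%MS.

Definition orthc (R : rcfType) (d : nat) (W : 'M[R]_d) : 'M[R]_d :=
  kermx W^T.

Definition norm_retrieval (R : rcfType) (d n : nat) (V : 'I_n -> 'M[R]_d) : Prop :=
  forall Q : 'I_n -> 'M[R]_d, (forall i, is_orth_proj (V i) (Q i)) ->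
  forall x y : 'rV[R]_d,
    (forall i, vnorm (x *m Q i) = vnorm (y *m Q i)) -> vnorm x = vnorm y.

(* Main.v *)
Require Import Defs.
From HB Require Import structures.
From mathcomp Require Import all_boot all_order all_algebra.
From mathcomp Require Import all_reals.
Import Order.TTheory GRing.Theory Num.Theory.
Local Open Scope ring_scope.
Set Implicit Arguments. Unset Strict Implicit.

Section Aux.
Variables (R : rcfType) (d : nat).

Definition ss (x : 'rV[R]_d) : R := \sum_(j < d) x 0 j ^+ 2.

Lemma ssE x : ss x = (x *m x^T) 0 0.
Proof. by rewrite /ss !mxE; apply: eq_bigr => j _; rewrite !mxE expr2. Qed.

Lemma ss_ge0 x : 0 <= ss x.
Proof. by apply: sumr_ge0 => j _; apply: sqr_ge0. Qed.

Lemma ss_eq0 x : ss x = 0 -> x = 0.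
Proof.
move=> h; apply/rowP => j; rewrite mxE.
have := psumr_eq0P (fun j _ => sqr_ge0 (x 0 j)) h (i:=j) isT.
by move/eqP; rewrite sqrf_eq0 => /eqP.
Qed.

Lemma vnorm_ss x y : vnorm x = vnorm y -> ss x = ss y.
Proof.
by move=> h; rewrite -(sqr_sqrtr (ss_ge0 x)) -(sqr_sqrtr (ss_ge0 y)); congr (_ ^+ 2).
Qed.

Lemma ss_vnorm x y : ss x = ss y -> vnorm x = vnorm y.
Proof. by rewrite /vnorm => h; congr Num.sqrt. Qed.

Lemma ss_proj (P : 'M[R]_d) x : P *m P = P -> P^T = P ->
  ss (x *m P) = (x *m P *m x^T) 0 0.
Proof.
move=> PP PT; rewrite ssE trmx_mul PT mulmxA -(mulmxA x P P) PP //.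
Qed.

Lemma quad_sum n (c : 'I_n -> R) (M : 'I_n -> 'M[R]_d) (x : 'rV[R]_d) :
  (x *m (\sum_i c i *: M i) *m x^T) 0 0 = \sum_i c i * (x *m M i *m x^T) 0 0.
Proof.
rewrite mulmx_sumr mulmx_suml summxE; apply: eq_bigr => i _.
by rewrite -scalemxAr -scalemxAl mxE.
Qed.

Lemma quad_scalar (c : R) x : (x *m c%:M *m x^T) 0 0 = c * ss x.
Proof. by rewrite mul_mx_scalar -scalemxAl mxE ssE. Qed.

Lemma quad_compl (P : 'M[R]_d) x :
  (x *m (1%:M - P) *m x^T) 0 0 = ss x - (x *m P *m x^T) 0 0.
Proof.
by rewrite mulmxBr mulmx1 mulmxBl ssE [LHS]mxE [X in _ + X = _]mxE.
Qed.

Lemma proj_uniq (W P Q : 'M[R]_d) :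
  is_orth_proj W P -> is_orth_proj W Q -> Q = P.
Proof.
move=> [PP [PT PW]] [QQ [QT QW]].
move/andP: PW => [PW WP]; move/andP: QW => [QW WQ].
have QPe : Q *m P = Q.
  by case/submxP: (submx_trans QW WP) => D ->; rewrite -mulmxA PP.
have PQe : P *m Q = P.
  by case/submxP: (submx_trans PW WQ) => D ->; rewrite -mulmxA QQ.
by rewrite -[LHS]QT -QPe trmx_mul PT QT PQe.
Qed.

Lemma proj_compl (W P Q : 'M[R]_d) :
  is_orth_proj W P -> is_orth_proj (orthc W) Q -> Q = 1%:M - P.
Proof.
move=> [PP [PT PW]] [QQ [QT QW]].
move/andP: PW => [PW WP]; move/andP: QW => [QW WQ].
rewrite /orthc in QW WQ.
have QWT : Q *m W^T = 0 by apply/sub_kermxP.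
have QP : Q *m P = 0.
  by case/submxP: PW => Y YP; rewrite -PT YP trmx_mul mulmxA QWT mul0mx.
have PQ : P *m Q = 0 by rewrite -PT -QT -trmx_mul QP trmx0.
have h1 : (1%:M - P) *m W^T = 0.
  case/submxP: WP => Z ->; rewrite trmx_mul PT mulmxA mulmxBl mul1mx PP.
  by rewrite subrr mul0mx.
have h2 : (1%:M - P <= Q)%MS.
  by apply: submx_trans WQ; apply/sub_kermxP.
case/submxP: h2 => X hX.
have : (1%:M - P) *m Q = 1%:M - P by rewrite hX -mulmxA QQ.
by rewrite mulmxBl mul1mx PQ subr0.
Qed.

End Aux.

Theorem mainTheorem2 (R : realType) (d n : nat)
  (W P : 'I_n -> 'M[R]_d)
  (hP : forall i, is_orth_proj (W i) (P i))
  (hproper : forall i, (\rank (W i) < d)%N)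
  (a : 'I_n -> R) (A : R) (hA : 0 < A)
  (hsum : \sum_(i < n) (a i ^+ 2) *: P i = A%:M) :
  norm_retrieval W /\ norm_retrieval (fun i => orthc (W i)).
Proof.
have key : forall x : 'rV[R]_d,
    A * ss x = \sum_i a i ^+ 2 * ss (x *m P i).
  move=> x; rewrite -quad_scalar -hsum quad_sum; apply: eq_bigr => i _.
  by case: (hP i) => PP [PT _]; rewrite ss_proj.
have Ane : A != 0 by rewrite gt_eqF.
split.
  move=> Q hQ x y hxy; apply: ss_vnorm.
  have hQP i : Q i = P i by apply: (proj_uniq (hP i) (hQ i)).
  apply: (mulfI Ane); rewrite !key; apply: eq_bigr => i _.
  by rewrite -hQP (vnorm_ss (hxy i)).
move=> Q hQ x y hxy.
have [d0|dpos] := eqVneq d 0%N.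
  by rewrite /vnorm !big1 // => j _; exfalso; have := ltn_ord j; rewrite {2}d0.
have dgt0 : (0 < d)%N by rewrite lt0n.
set S := \sum_i a i ^+ 2.
have key2 : forall x : 'rV[R]_d,
    (S - A) * ss x = \sum_i a i ^+ 2 * ss (x *m Q i).
  move=> z; transitivity (\sum_i a i ^+ 2 * (ss z - ss (z *m P i))).
    by rewrite mulrBl key mulr_suml -sumrB; apply: eq_bigr => i _; rewrite mulrBr.
  apply: eq_bigr => i _; rewrite (proj_compl (hP i) (hQ i)).
  case: (hP i) => PP [PT _].
  have [C2 [CT _]] := hQ i.
  rewrite (proj_compl (hP i) (hQ i)) in C2 CT.
  by rewrite [in RHS]ss_proj // quad_compl ss_proj.
have SA : S - A != 0.
  apply/negP => /eqP SA.
  have [i ai] : exists i, a i != 0.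
    apply/existsP; apply: contraT; rewrite negb_exists => /forallP H.
    have H' : forall i, a i = 0 by move=> i; apply/eqP; have := H i; rewrite negbK.
    have : (A%:M : 'M[R]_d) (Ordinal dgt0) (Ordinal dgt0) = 0.
      by rewrite -hsum big1 ?mxE // => i _; rewrite H' expr0n scale0r.
    by rewrite mxE eqxx mulr1n => A0; move: Ane; rewrite A0 eqxx.
  have hz : forall z : 'rV[R]_d, z *m Q i = 0.
    move=> z; apply: ss_eq0.
    have h0 := key2 z; rewrite SA mul0r in h0.
    have := psumr_eq0P (fun j _ => mulr_ge0 (sqr_ge0 (a j)) (ss_ge0 (z *m Q j)))
      (esym h0) (i:=i) isT.
    by move/eqP; rewrite mulf_eq0 sqrf_eq0 (negbTE ai) /= => /eqP.
  have Q0 : Q i = 0.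
    by apply/row_matrixP => k; rewrite row0 rowE hz.
  have := proj_compl (hP i) (hQ i); rewrite Q0 => /esym /subr0_eq P1.
  case: (hP i) => _ [_ PW].
  have := hproper i; rewrite -(eqmx_rank PW) -P1 mxrank1 ltnn //.
apply: ss_vnorm; apply: (mulfI SA); rewrite !key2; apply: eq_bigr => i _.
by rewrite (vnorm_ss (hxy i)).
Qed.
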